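(* The multiplication map $\widetilde{\mathrm{Sym}}\otimes\big(\mathrm{NSym}\,\square_{\mathrm{Sym}}\,\mathbb{Z}\big)\to\mathrm{NSym}$ is an isomorphism.
   Context: $\mathrm{NSym}=\mathbb{Z}\langle Z_1,Z_2,\ldots\rangle$ is the free associative algebra (non-commutative symmetric functions) with coproduct $\Delta Z_n=\sum_{p+q=n}Z_p\otimes Z_q$ ($Z_0=1$); $\mathrm{Sym}=\mathbb{Z}[Z_1,Z_2,\ldots]$ is its abelianization with projection $\pi\colon\mathrm{NSym}\to\mathrm{Sym}$. The cotensor product is $\mathrm{NSym}\,\square_{\mathrm{Sym}}\,\mathbb{Z}=\{n\in\mathrm{NSym}:(\mathrm{id}\otimes\pi)\Delta n=n\otimes1\}$. $\widetilde{\mathrm{Sym}}\subset\mathrm{NSym}$ is the $\mathbb{Z}$-span of the monomials $Z_{i_1}^{a_1}\cdots Z_{i_n}^{a_n}$ with $i_1\le\cdots\le i_n$. The tensor product is over $\mathbb{Z}$. *)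

(* Defs.v *)
From mathcomp Require Import all_boot all_algebra.
Set Implicit Arguments. Unset Strict Implicit. Unset Printing Implicit Defensive.
Import GRing.Theory.
Local Open Scope ring_scope.

(* Words in the generators of NSym.  The letter [i : nat] stands for the
   generator Z_(i+1); the empty word is 1 = Z_0.  An element of NSym (free
   Z-module on words) is a finitely supported coefficient function
   [word -> int]. *)
Definition word := seq nat.

Definition NSym_elt (f : word -> int) : Prop :=
  exists S : seq word, forall w, f w != 0 -> w \in S.

Definition Zword (p : nat) : word := if p is p'.+1 then [:: p'] else [::].

(* All terms (with multiplicity) of Delta(w) = prod_j Delta(Z_(n_j)),
   with Delta Z_n = sum_(p+q=n) Z_p (x) Z_q. *)
Fixpoint splits (w : word) : seq (word * word) :=
  match w with
  | [::] => [:: ([::], [::])]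
  | a :: w' =>
      [seq (Zword p ++ s.1, Zword (a.+1 - p) ++ s.2)
         | p <- iota 0 a.+2, s <- splits w']
  end.

(* Coefficient of  u (x) [m]  in (id (x) pi) Delta f, where [m] is the
   commutative monomial of Sym given by (the multiset of) the word m;
   S is any finite list covering the support of f. *)
Definition coproj_coef (f : word -> int) (S : seq word) (u m : word) : int :=
  \sum_(w <- undup S)
     f w * (count (fun s : word * word => (s.1 == u) && perm_eq s.2 m)
                  (splits w))%:Z.

(* f lies in the cotensor product NSym []_Sym Z :
   (id (x) pi) Delta f = f (x) 1. *)
Definition in_cotensor (f : word -> int) : Prop :=
  exists S : seq word, (forall w, f w != 0 -> w \in S) /\
    forall u m, coproj_coef f S u m = (if m == [::] then f u else 0).

(* Sym~ is free on the monomials Z_(i_1)^(a_1)...Z_(i_n)^(a_n), i_1<=...<=i_n,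
   i.e. on the nondecreasing words.  Hence an element of
   Sym~ (x)_Z (NSym []_Sym Z) is a finitely supported family (c_w)_w,
   w nondecreasing, of elements of the cotensor product; c w x is the
   coefficient of the word x in c_w. *)
Definition tensor_elt (c : word -> word -> int) : Prop :=
  [/\ exists W : seq word, forall w x, c w x != 0 -> w \in W,
      forall w x, c w x != 0 -> sorted leq w &
      forall w, in_cotensor (c w)].

(* The multiplication map  sum_w w (x) c_w  |->  sum_w w * c_w,
   evaluated at the coefficient of the word x. *)
Definition mult_map (c : word -> word -> int) (x : word) : int :=
  \sum_(i < (size x).+1) c (take i x) (drop i x).

(* Main.v *)
Require Import Defs.
From mathcomp Require Import all_boot all_algebra zify.
From Stdlib Require Import Classical.
Set Implicit Arguments. Unset Strict Implicit. Unset Printing Implicit Defensive.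
Import GRing.Theory.

Ltac isimp := rewrite /= ?mulr1n ?mulr0n ?mul0r ?mulr0 ?mul1r ?mulr1 ?andbT ?andbF //.

Section Proofs.
Local Open Scope ring_scope.

Definition deg (w : word) : nat := (\sum_(a <- w) a.+1)%N.

Lemma deg_nil : deg [::] = 0%N. Proof. by rewrite /deg big_nil. Qed.
Lemma deg_cons a w : deg (a :: w) = (a.+1 + deg w)%N. Proof. by rewrite /deg big_cons. Qed.
Lemma deg_cat u v : deg (u ++ v) = (deg u + deg v)%N. Proof. by rewrite /deg big_cat. Qed.
Lemma deg_perm u v : perm_eq u v -> deg u = deg v. Proof. by move=> h; rewrite /deg (perm_big _ h). Qed.
Lemma deg_Zword p : deg (Zword p) = p.
Proof. by case: p => [|p]; rewrite /= ?deg_nil // deg_cons deg_nil addn0. Qed.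
Lemma deg0 w : (deg w == 0%N) = (w == [::]).
Proof. by case: w => [|a w]; rewrite ?deg_nil // deg_cons. Qed.
Lemma cat_nil (u v : word) : (u ++ v == [::]) = (u == [::]) && (v == [::]).
Proof. by case: u. Qed.
Lemma Zword_nil p : (Zword p == [::]) = (p == 0%N).
Proof. by case: p. Qed.

Lemma sum_splits_cons a y (F : word * word -> int) :
  \sum_(s <- splits (a :: y)) F s =
  \sum_(p <- iota 0 a.+2) \sum_(s <- splits y) F (Zword p ++ s.1, Zword (a.+1 - p) ++ s.2).
Proof. exact: big_allpairs_dep. Qed.

Lemma mem_splits_cons a y s : s \in splits (a :: y) ->
  exists p s', [/\ (p <= a.+1)%N, s' \in splits y & s = (Zword p ++ s'.1, Zword (a.+1 - p) ++ s'.2)].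
Proof.
move=> /allpairsPdep [p [s' [hp hs ->]]]; exists p, s'; split=> //.
by move: hp; rewrite mem_iota add0n ltnS.
Qed.

Lemma splits_deg w s : s \in splits w -> (deg s.1 + deg s.2)%N = deg w.
Proof.
elim: w s => [|a w IH] s /=.
  by rewrite inE => /eqP -> /=; rewrite deg_nil.
move=> /mem_splits_cons [p [s' [hp hs ->]]] /=.
rewrite !deg_cat !deg_Zword deg_cons -(IH _ hs).
move: (deg s'.1) (deg s'.2) => x y; lia.
Qed.

Lemma splits_top w s : s \in splits w -> s.1 = [::] -> s = ([::], w).
Proof.
elim: w s => [|a w IH] s /=.
  by rewrite inE => /eqP ->.
move=> /mem_splits_cons [p [s' [hp hs ->]]] /= /eqP.
rewrite cat_nil Zword_nil => /andP [/eqP p0 /eqP s1].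
by rewrite p0 subn0 (IH _ hs s1).
Qed.

Lemma splits_bot w s : s \in splits w -> s.2 = [::] -> s = (w, [::]).
Proof.
elim: w s => [|a w IH] s /=.
  by rewrite inE => /eqP ->.
move=> /mem_splits_cons [p [s' [hp hs ->]]] /= /eqP.
rewrite cat_nil Zword_nil => /andP [/eqP p0 /eqP s2].
have -> : p = a.+1 by apply/eqP; rewrite eqn_leq hp /= -subn_eq0 p0.
by rewrite (IH _ hs s2) /= subnn.
Qed.

Lemma count_splits_cons a y (P : pred (word * word)) :
  count P (splits (a :: y)) =
  (\sum_(p <- iota 0 a.+2) count (fun s => P (Zword p ++ s.1, Zword (a.+1 - p) ++ s.2)) (splits y))%N.
Proof.
rewrite -sum1_count big_mkcond.
transitivity (\sum_(p <- iota 0 a.+2) \sum_(s <- splits y)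
   (if P (Zword p ++ s.1, Zword (a.+1 - p) ++ s.2) then 1 else 0))%N.
  exact: big_allpairs_dep.
by apply: eq_bigr => p _; rewrite -sum1_count [RHS]big_mkcond.
Qed.

Lemma count_top w : count (pred1 ([::], w)) (splits w) = 1%N.
Proof.
elim: w => [|a w IH] //.
rewrite count_splits_cons -[iota 0 a.+2]/(0%N :: iota 1 a.+1) big_cons.
rewrite big_seq big1 ?addn0; last first.
  move=> p; rewrite mem_iota => /andP [hp _].
  apply/eqP; rewrite -leqn0 leqNgt -has_count; apply/hasP => -[s _] /=.
  rewrite xpair_eqE cat_nil Zword_nil; case: p hp => //.
rewrite -[RHS]IH subn0; apply: eq_count => -[x y] /=.
by rewrite !xpair_eqE eqseq_cons eqxx.
Qed.

Lemma count_bot w : count (pred1 (w, [::])) (splits w) = 1%N.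
Proof.
elim: w => [|a w IH] //.
rewrite count_splits_cons.
have -> : iota 0 a.+2 = iota 0 a.+1 ++ [:: a.+1] by rewrite -addn1 iotaD.
rewrite big_cat big_seq1.
rewrite big_seq big1 ?add0n; last first.
  move=> p; rewrite mem_iota => /andP [_ hp].
  apply/eqP; rewrite -leqn0 leqNgt -has_count; apply/hasP => -[s _] /=.
  rewrite xpair_eqE cat_nil Zword_nil subn_eq0.
  by rewrite add0n in hp; rewrite leqNgt hp andbF.
rewrite -[RHS]IH subnn; apply: eq_count => -[x y] /=.
by rewrite !xpair_eqE eqseq_cons eqxx.
Qed.

Lemma countZ (T : Type) (P : pred T) (s : seq T) :
  (count P s)%:Z = \sum_(x <- s | P x) 1.
Proof.
elim: s => [|x s IH]; first by rewrite big_nil.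
by rewrite big_cons /= PoszD -IH; case: (P x); rewrite ?add0r.
Qed.

Lemma sum_splits_nil (F : word * word -> int) :
  \sum_(s <- splits [::]) F s = F ([::], [::]).
Proof. by rewrite /= big_seq1. Qed.

Lemma sum_splits_cat x y (F : word * word -> int) :
  \sum_(s <- splits (x ++ y)) F s =
  \sum_(s <- splits x) \sum_(t <- splits y) F (s.1 ++ t.1, s.2 ++ t.2).
Proof.
elim: x F => [|a x IH] F.
  by rewrite sum_splits_nil /=; apply: eq_bigr => -[].
rewrite cat_cons !sum_splits_cons; apply: eq_bigr => p _.
rewrite IH; apply: eq_bigr => s _; apply: eq_bigr => t _ /=.
by rewrite !catA.
Qed.

Lemma sum_splits_Zcat p r (G : word * word -> int) :
  \sum_(t <- splits (Zword p ++ r)) G t =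
  \sum_(q <- iota 0 p.+1) \sum_(t <- splits r) G (Zword q ++ t.1, Zword (p - q) ++ t.2).
Proof.
case: p => [|p].
  by rewrite /= big_seq1; apply: eq_bigr => -[].
by rewrite /= sum_splits_cons.
Qed.

Lemma sum_splits_perm z z' (F : word * word -> int) :
  (forall u v u' v', perm_eq u u' -> perm_eq v v' -> F (u, v) = F (u', v')) ->
  perm_eq z z' -> \sum_(s <- splits z) F s = \sum_(s <- splits z') F s.
Proof.
elim: z z' F => [|a z IH] z' F HF hp.
  by rewrite perm_sym in hp; move/perm_nilP: hp => ->.
have ha : a \in z' by rewrite -(perm_mem hp) mem_head.
case/splitPr: ha hp => z1 z2 hp.
rewrite [RHS]sum_splits_cat exchange_big /=.
transitivity (\sum_(t <- splits (a :: z2 ++ z1)) F t); last first.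
  rewrite -cat_cons sum_splits_cat; apply: eq_bigr => t _; apply: eq_bigr => s _.
  by apply: HF; rewrite perm_catC.
rewrite !sum_splits_cons; apply: eq_bigr => p _; apply: IH.
  by move=> u v u' v' h1 h2; apply: HF; rewrite perm_cat2l.
have h2 : perm_eq (a :: z) (a :: z1 ++ z2).
  by rewrite (perm_trans hp) // -cat1s perm_catCA.
rewrite perm_cons in h2.
by rewrite (perm_trans h2) // perm_catC.
Qed.

Lemma bigcatZ (T : Type) (r1 r2 : seq T) (F : T -> int) :
  \sum_(i <- r1 ++ r2) F i = \sum_(i <- r1) F i + \sum_(i <- r2) F i.
Proof. by rewrite big_cat. Qed.

Lemma iotaS_r n : iota 0 n.+1 = iota 0 n ++ [:: n].
Proof. by rewrite -addn1 iotaD. Qed.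

Lemma triangle N (H : nat -> nat -> nat -> int) :
  \sum_(p <- iota 0 N.+1) \sum_(q <- iota 0 p.+1) H q (p - q)%N (N - p)%N =
  \sum_(p <- iota 0 N.+1) \sum_(r <- iota 0 (N - p).+1) H p r (N - p - r)%N.
Proof.
elim: N H => [|N IH] H; first by rewrite /= !big_seq1.
rewrite [in LHS]iotaS_r [in RHS]iotaS_r !bigcatZ !big_seq1 subnn.
have E1 : \sum_(p <- iota 0 N.+1) \sum_(q <- iota 0 p.+1) H q (p - q)%N (N.+1 - p)%N =
          \sum_(p <- iota 0 N.+1) \sum_(q <- iota 0 p.+1) H q (p - q)%N (N - p)%N.+1.
  apply: eq_big_seq => p hp; move: hp; rewrite mem_iota add0n ltnS => hp.
  by apply: eq_bigr => q _; rewrite subSn.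
have E2 : \sum_(p <- iota 0 N.+1) \sum_(r <- iota 0 (N.+1 - p).+1) H p r (N.+1 - p - r)%N =
          \sum_(p <- iota 0 N.+1) \sum_(r <- iota 0 (N - p).+1) H p r (N - p - r)%N.+1
        + \sum_(p <- iota 0 N.+1) H p (N - p).+1 0%N.
  rewrite -big_split; apply: eq_big_seq => p hp; move: hp; rewrite mem_iota add0n ltnS => hp.
  rewrite subSn // iotaS_r bigcatZ big_seq1 subnn; congr (_ + _).
  apply: eq_big_seq => r hr; move: hr; rewrite mem_iota add0n ltnS => hr.
  by rewrite -subnDA subSn ?subnDA // -leq_subRL.
rewrite E1 E2 (IH (fun q j k => H q j k.+1)) -addrA; congr (_ + _).
rewrite iotaS_r bigcatZ big_seq1 subnn big_seq1 sub0n; congr (_ + _).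
by apply: eq_big_seq => q hq; move: hq; rewrite mem_iota add0n ltnS => hq; rewrite subSn.
Qed.

Lemma coassoc y (F : word -> word -> word -> int) :
  \sum_(s <- splits y) \sum_(t <- splits s.1) F t.1 t.2 s.2 =
  \sum_(s <- splits y) \sum_(t <- splits s.2) F s.1 t.1 t.2.
Proof.
elim: y F => [|a y IH] F; first by rewrite !sum_splits_nil.
pose G i j k := \sum_(s <- splits y) \sum_(t <- splits s.2)
   F (Zword i ++ s.1) (Zword j ++ t.1) (Zword k ++ t.2).
rewrite !sum_splits_cons.
transitivity (\sum_(p <- iota 0 a.+2) \sum_(q <- iota 0 p.+1) G q (p - q)%N (a.+1 - p)%N).
  apply: eq_bigr => p _.
  under eq_bigr do rewrite /= sum_splits_Zcat.
  rewrite exchange_big; apply: eq_bigr => q _.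
  rewrite /G -(IH (fun u v w => F (Zword q ++ u) (Zword (p - q) ++ v) (Zword (a.+1 - p) ++ w))).
  by [].
transitivity (\sum_(p <- iota 0 a.+2) \sum_(r <- iota 0 (a.+1 - p).+1) G p r (a.+1 - p - r)%N).
  exact: (triangle a.+1 G).
apply: eq_bigr => p _.
under [RHS]eq_bigr do rewrite /= sum_splits_Zcat.
by rewrite [RHS]exchange_big.
Qed.

Definition cover (f : word -> int) (S : seq word) := forall w, f w != 0 -> w \in S.

Definition Nc (y u m : word) : int :=
  (count (fun s : word * word => (s.1 == u) && perm_eq s.2 m) (splits y))%:Z.

Lemma coprojE f S u m : coproj_coef f S u m = \sum_(w <- undup S) f w * Nc w u m.
Proof. by []. Qed.

Lemma countR (T : Type) (P : pred T) (s : seq T) :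
  (count P s)%:Z = \sum_(x <- s) (P x)%:R.
Proof.
elim: s => [|x s IH]; first by rewrite big_nil.
by rewrite big_cons /= PoszD -IH; case: (P x).
Qed.

Lemma NcE y u m : Nc y u m = \sum_(s <- splits y) ((s.1 == u) && perm_eq s.2 m)%:R.
Proof. by rewrite /Nc countR. Qed.

Lemma sum_cover (f G : word -> int) S1 S2 : cover f S1 -> cover f S2 ->
  \sum_(w <- undup S1) f w * G w = \sum_(w <- undup S2) f w * G w.
Proof.
move=> h1 h2.
have E (A B : seq word) : cover f B ->
    \sum_(w <- undup A) f w * G w = \sum_(w <- [seq x <- undup A | x \in B]) f w * G w.
  move=> hB; rewrite big_filter [RHS]big_mkcond; apply: eq_bigr => w _.
  by case: ifP => // hw; case: (eqVneq (f w) 0) => [->|/hB]; rewrite ?mul0r // hw.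
rewrite (E S1 S2 h2) (E S2 S1 h1); apply: perm_big; apply: uniq_perm.
- by rewrite filter_uniq ?undup_uniq.
- by rewrite filter_uniq ?undup_uniq.
by move=> w; rewrite !mem_filter !mem_undup andbC.
Qed.

Lemma in_cot f S : in_cotensor f -> cover f S ->
  forall u m, coproj_coef f S u m = if m == [::] then f u else 0.
Proof.
move=> [S0 [h0 H]] hS u m; rewrite -H !coprojE.
exact: sum_cover.
Qed.

Lemma pick1 (s : seq word) (H : word -> int) a : uniq s -> (H a != 0 -> a \in s) ->
  H a = \sum_(w <- s) H w * (a == w)%:R.
Proof.
move=> us ha; case: (boolP (a \in s)) => ins.
  rewrite (bigD1_seq a) //= eqxx mulr1 big1 ?addr0 // => w hw.
  by rewrite eq_sym (negbTE hw) mulr0.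
rewrite big_seq big1; last first.
  by move=> w hw; case: eqP => [e|]; [rewrite e hw in ins|rewrite mulr0].
by apply/eqP; apply: contraNT ins.
Qed.

Lemma Nc_nil y u : Nc y u [::] = (y == u)%:R.
Proof.
rewrite /Nc.
transitivity ((count (fun s => (s == (y, [::])) && (y == u)) (splits y))%:Z).
  congr (Posz _); apply: eq_in_count => s hs /=.
  case: (eqVneq s (y, [::])) => [-> /=|ne]; first by rewrite perm_refl andbT eq_sym.
  apply/negbTE; apply: contra ne => /andP [_ /perm_nilP h].
  by rewrite (splits_bot hs h).
case: (y == u); last by rewrite (eq_count (a2 := pred0)) ?count_pred0 // => s; rewrite andbF.
by rewrite (eq_count (a2 := pred1 (y, [::]))) ?count_bot // => s; rewrite andbT.
Qed.

Lemma rho_nil f S u : cover f S -> coproj_coef f S u [::] = f u.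
Proof.
move=> hS; rewrite coprojE.
under eq_bigr do rewrite Nc_nil eq_sym.
rewrite -(pick1 (H := f)) ?undup_uniq // => /hS; by rewrite mem_undup.
Qed.

Lemma rho_nz f S u m : coproj_coef f S u m != 0 ->
  exists y s, [/\ y \in S, s \in splits y, s.1 = u & perm_eq s.2 m].
Proof.
move=> H; apply: NNPP => hne; move/eqP: H; apply.
rewrite coprojE big_seq big1 // => y; rewrite mem_undup => hy.
rewrite NcE big_seq big1 ?mulr0 // => s hs.
case: andP => // -[/eqP h1 h2]; case: hne; by exists y, s.
Qed.

Lemma rhoB f g S u m : coproj_coef (fun x => f x - g x) S u m =
  coproj_coef f S u m - coproj_coef g S u m.
Proof. by rewrite !coprojE -sumrB; apply: eq_bigr => w _; rewrite mulrBl. Qed.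

Lemma rhoD f g S u m : coproj_coef (fun x => f x + g x) S u m =
  coproj_coef f S u m + coproj_coef g S u m.
Proof. by rewrite !coprojE -big_split; apply: eq_bigr => w _; rewrite mulrDl. Qed.

Lemma take_drop_sum (x w z : word) :
  \sum_(i < (size x).+1) ((take i x == w) && (drop i x == z))%:R = (x == w ++ z)%:R :> int.
Proof.
case: (eqVneq x (w ++ z)) => [->|hne]; last first.
  rewrite big1 // => i _; case: andP => // -[/eqP h1 /eqP h2].
  by rewrite -h1 -h2 cat_take_drop eqxx in hne.
have hw : (size w < (size (w ++ z)).+1)%N by rewrite size_cat ltnS leq_addr.
rewrite (bigD1 (Ordinal hw)) //= take_size_cat // drop_size_cat // !eqxx /=.
rewrite big1 ?addr0 // => i /= hi.
case: andP => // -[/eqP h1 _]; case/eqP: hi; apply: val_inj => /=.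
have hi2 : (i <= size (w ++ z))%N by rewrite -ltnS.
by rewrite -[X in _ = size X]h1 size_takel.
Qed.

Lemma pick2 (e : word -> word -> int) W T a b : uniq W -> uniq T ->
  (forall w z, e w z != 0 -> w \in W /\ z \in T) ->
  e a b = \sum_(w <- W) \sum_(z <- T) e w z * ((a == w) && (b == z))%:R.
Proof.
move=> uW uT He.
rewrite (pick1 (H := fun w => e w b) (s := W)) //; last by move/He => [].
apply: eq_bigr => w _.
rewrite (pick1 (H := e w) (s := T) (a := b)) //; last by move/He => [].
rewrite mulr_suml; apply: eq_bigr => z _.
by rewrite -mulrA; congr (_ * _); case: (a == w); case: (b == z); rewrite ?mulr0 ?mulr1.
Qed.

Lemma mult_mapE (e : word -> word -> int) W T x : uniq W -> uniq T ->
  (forall w z, e w z != 0 -> w \in W /\ z \in T) ->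
  mult_map e x = \sum_(w <- W) \sum_(z <- T) e w z * (x == w ++ z)%:R.
Proof.
move=> uW uT He; rewrite /mult_map.
under eq_bigr do rewrite (pick2 _ _ uW uT He).
rewrite exchange_big; apply: eq_bigr => w _.
rewrite exchange_big; apply: eq_bigr => z _.
by rewrite -mulr_sumr take_drop_sum.
Qed.

Lemma sum_mult_map (e : word -> word -> int) W T (G : word -> int) :
  (forall w z, e w z != 0 -> w \in W /\ z \in T) ->
  \sum_(x <- undup [seq w ++ z | w <- W, z <- T]) mult_map e x * G x =
  \sum_(w <- undup W) \sum_(z <- undup T) e w z * G (w ++ z).
Proof.
move=> He.
have He' : forall w z, e w z != 0 -> w \in undup W /\ z \in undup T.
  by move=> w z /He; rewrite !mem_undup.
under eq_bigr do rewrite (mult_mapE _ (undup_uniq W) (undup_uniq T) He') mulr_suml.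
rewrite exchange_big; apply: eq_bigr => w _.
under eq_bigr do rewrite mulr_suml.
rewrite exchange_big; apply: eq_bigr => z _.
case: (eqVneq (e w z) 0) => [->|nz].
  by rewrite mul0r big1 // => x _; rewrite !mul0r.
under eq_bigr do rewrite -mulrA.
rewrite -mulr_sumr; congr (_ * _).
rewrite (pick1 (H := G) (s := undup [seq w0 ++ z0 | w0 <- W, z0 <- T]) (a := w ++ z)).
- by apply: eq_bigr => x _; rewrite mulrC eq_sym.
- exact: undup_uniq.
move=> _; rewrite mem_undup; case: (He _ _ nz) => hw hz.
exact: allpairs_f.
Qed.

Lemma catS_eq (a x y : word) : (a ++ x == a ++ y) = (x == y).
Proof. by rewrite eqseq_cat // eqxx. Qed.

Lemma rho_shift f T (a b u m : word) : in_cotensor f -> cover f T ->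
  \sum_(z <- undup T) f z * \sum_(t <- splits z) ((a ++ t.1 == u) && perm_eq (b ++ t.2) m)%:R
  = ((prefix a u) && perm_eq b m)%:R * f (drop (size a) u).
Proof.
move=> hC hT.
case: prefixP => [[u' ->]|np]; last first.
  rewrite mul0r big1 // => z _; rewrite big1 ?mulr0 // => t _.
  case: eqP => //= h; case: np; by exists t.1.
rewrite drop_size_cat //=.
under eq_bigr do under eq_bigr do rewrite catS_eq.
case: (classic (exists m', perm_eq m (b ++ m'))) => [[m' hm]|nm].
  under eq_bigr do under eq_bigr do rewrite (permPr hm) perm_cat2l.
  rewrite (permPr hm) -{1}[b]cats0 perm_cat2l.
  transitivity (coproj_coef f T u' m').
    by rewrite coprojE; apply: eq_bigr => z _; rewrite NcE.
  rewrite (in_cot hC hT).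
  case: (eqVneq m' [::]) => [->|ne]; first by rewrite perm_refl mul1r.
  suff -> : perm_eq [::] m' = false by rewrite mul0r.
  by apply/negbTE; apply: contra ne; rewrite perm_sym => /perm_nilP ->.
have -> : perm_eq b m = false.
  apply/negbTE/negP => h; case: nm; exists [::]; by rewrite cats0 perm_sym.
rewrite mul0r big1 // => z _; rewrite big1 ?mulr0 // => t _.
case: andP => // -[_ h]; case: nm; exists t.2; by rewrite perm_sym.
Qed.

Lemma KL (e : word -> word -> int) (W T X : seq word) (u m : word) :
  (forall w z, e w z != 0 -> w \in W /\ z \in T) ->
  (forall w, in_cotensor (e w)) ->
  cover (mult_map e) X ->
  coproj_coef (mult_map e) X u m =
  \sum_(w <- undup W) \sum_(s <- splits w)
      ((prefix s.1 u) && perm_eq s.2 m)%:R * e w (drop (size s.1) u).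
Proof.
move=> He hC hX.
have hX' : cover (mult_map e) [seq w ++ z | w <- W, z <- T].
  move=> x; apply: contraR => hx; rewrite /mult_map big1 // => i _.
  apply/eqP; apply: contraR hx => /He [h1 h2].
  by rewrite -(cat_take_drop i x); apply: allpairs_f.
rewrite coprojE (sum_cover _ hX hX') sum_mult_map //.
apply: eq_bigr => w _.
under eq_bigr do rewrite NcE sum_splits_cat mulr_sumr.
rewrite exchange_big; apply: eq_bigr => s _ /=.
apply: rho_shift => //.
move=> z hz; have [] := He w z hz; by [].
Qed.

Lemma KL_top (e : word -> word -> int) (W T X : seq word) (u m : word) :
  (forall w z, e w z != 0 -> w \in W /\ z \in T) ->
  (forall w, in_cotensor (e w)) ->
  cover (mult_map e) X ->
  (forall w z, e w z != 0 -> (deg w <= deg m)%N) ->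
  coproj_coef (mult_map e) X u m = \sum_(w <- undup W) (perm_eq w m)%:R * e w u.
Proof.
move=> He hC hX Hdeg; rewrite (KL _ _ He hC hX); apply: eq_bigr => w _.
case: (classic (exists z, e w z != 0)) => [[z hz]|nz]; last first.
  have h0 : forall z, e w z = 0.
    by move=> z; case: (eqVneq (e w z) 0) => // h; case: nz; exists z.
  by rewrite h0 mulr0 big1 // => s _; rewrite h0 mulr0.
have hd := Hdeg _ _ hz.
transitivity (\sum_(s <- splits w) (s == ([::], w))%:R * ((perm_eq w m)%:R * e w u)).
  apply: eq_big_seq => s hs.
  case: (eqVneq s ([::], w)) => [-> /=|ne]; first by rewrite drop0 mul1r; case: u.
  case: andP => [[_ hp]|_]; last by rewrite !mul0r.
  exfalso; move/eqP: ne; apply.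
  apply: (splits_top hs); apply/eqP; rewrite -deg0.
  have := splits_deg hs; rewrite (deg_perm hp) => h.
  apply/eqP; move: h hd; move: (deg s.1) (deg m) (deg w) => x y t; lia.
by rewrite -mulr_suml -countR count_top mul1r.
Qed.

Lemma CA (a : word -> int) (S : seq word) (D : nat) (m m' v : word) :
  cover a S ->
  (forall u m0, (D < deg m0)%N -> coproj_coef a S u m0 = 0) ->
  deg m = D -> m' != [::] ->
  coproj_coef (fun x => coproj_coef a S x m) [seq s.1 | y <- S, s <- splits y] v m' = 0.
Proof.
move=> hS htop hm hm'.
set U := [seq s.1 | y <- S, s <- splits y].
pose K z := \sum_(t <- splits z) (perm_eq t.1 m' && perm_eq t.2 m)%:R : int.
set Z := undup [seq sort leq s.2 | y <- S, s <- splits y].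
have step1 : forall y, y \in S -> \sum_(u <- undup U) Nc y u m * Nc u v m' =
    \sum_(s <- splits y) (s.1 == v)%:R * K s.2.
  move=> y hy.
  transitivity (\sum_(s <- splits y) (perm_eq s.2 m)%:R * Nc s.1 v m').
    under eq_bigr do rewrite NcE mulr_suml.
    rewrite exchange_big; apply: eq_big_seq => s hs.
    have hmem : s.1 \in undup U by rewrite mem_undup; apply/allpairsPdep; exists y, s.
    rewrite (pick1 (H := fun u => Nc u v m') (undup_uniq U) (fun _ => hmem)).
    rewrite mulr_sumr; apply: eq_bigr => u _.
    rewrite eq_sym; case: (u == s.1); case: (perm_eq s.2 m); isimp.
  transitivity (\sum_(s <- splits y) \sum_(t <- splits s.1)
      (((t.1 == v) && perm_eq t.2 m' && perm_eq s.2 m)%:R : int)).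
    apply: eq_bigr => s _; rewrite NcE mulr_sumr; apply: eq_bigr => t _.
    by case: (perm_eq s.2 m); rewrite ?andbT ?andbF ?mul1r ?mul0r.
  rewrite (coassoc _ (fun t1 t2 s2 => (((t1 == v) && perm_eq t2 m' && perm_eq s2 m)%:R : int))).
  apply: eq_bigr => s _; rewrite /K mulr_sumr; apply: eq_bigr => t _.
  by case: (s.1 == v) => /=; rewrite ?mul1r ?mul0r.
have step2 : forall y s, y \in S -> s \in splits y ->
    K s.2 = \sum_(z <- Z) (perm_eq s.2 z)%:R * K z.
  move=> y s hy hs.
  have hz : sort leq s.2 \in Z by rewrite mem_undup; apply/allpairsPdep; exists y, s.
  have -> : K s.2 = K (sort leq s.2).
    apply: sum_splits_perm; last by rewrite perm_sym perm_sort.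
    by move=> u1 v1 u2 v2 h1 h2 /=; rewrite (permPl h1) (permPl h2).
  rewrite (pick1 (H := K) (undup_uniq _) (fun _ => hz)).
  apply: eq_big_seq => z hzZ; rewrite mulrC; congr (_ * _); congr (_%:R).
  move: hzZ; rewrite mem_undup => /allpairsPdep [y' [s' [_ _ ->]]].
  have h : perm_eq (sort leq s'.2) s'.2 by rewrite perm_sort perm_refl.
  rewrite (permPr h).
  have := sameP eqP (perm_sortP leq_total leq_trans anti_leq s.2 s'.2). move=> ->. by [].
transitivity (\sum_(u <- undup U) (\sum_(y <- undup S) a y * Nc y u m) * Nc u v m').
  by [].
under eq_bigr do rewrite mulr_suml.
rewrite exchange_big.
transitivity (\sum_(y <- undup S) \sum_(s <- splits y) \sum_(z <- Z)
    K z * (a y * ((s.1 == v) && perm_eq s.2 z)%:R)).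
  apply: eq_big_seq => y; rewrite mem_undup => hy.
  under eq_bigr do rewrite -mulrA.
  rewrite -mulr_sumr step1 // mulr_sumr; apply: eq_big_seq => s hs.
  rewrite (step2 y s hy hs) !mulr_sumr; apply: eq_bigr => z _.
  by case: (s.1 == v); case: (perm_eq s.2 z); rewrite /= ?mul0r ?mulr0 ?mul1r ?mulr1 // mulrC.
transitivity (\sum_(z <- Z) K z * coproj_coef a S v z).
  under [RHS]eq_bigr do rewrite coprojE mulr_sumr.
  rewrite [RHS]exchange_big; apply: eq_bigr => y _.
  under [RHS]eq_bigr do rewrite NcE !mulr_sumr.
  by rewrite [RHS]exchange_big.
rewrite big1 // => z _.
case: (eqVneq (K z) 0) => [->|nz]; first by rewrite mul0r.
rewrite htop ?mulr0 //.
have [t [ht /andP [h1 h2]]] : exists t, t \in splits z /\ (perm_eq t.1 m' && perm_eq t.2 m).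
  apply: NNPP => hne; move/eqP: nz; apply; rewrite /K big_seq big1 // => t ht.
  by case: (boolP (_ && _)) => // hb; case: hne; exists t.
rewrite -(splits_deg ht) (deg_perm h1) (deg_perm h2) hm.
have : deg m' != 0%N by rewrite deg0.
move: (deg m') => x; lia.
Qed.

Lemma in_cot_ext f g : f =1 g -> in_cotensor f -> in_cotensor g.
Proof.
move=> fg [S [hS H]]; exists S; split.
  by move=> w; rewrite -fg => /hS.
move=> u m; rewrite -fg -(H u m) !coprojE; apply: eq_bigr => w _; by rewrite fg.
Qed.

Lemma in_cot0 : in_cotensor (fun _ => 0).
Proof.
exists [::]; split => // u m; rewrite coprojE big_nil; by case: (m == [::]).
Qed.

Lemma cover_cat f S1 S2 : cover f S1 -> cover f (S1 ++ S2).
Proof. by move=> h w /h; rewrite mem_cat => ->. Qed.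

Lemma cover_catr f S1 S2 : cover f S2 -> cover f (S1 ++ S2).
Proof. by move=> h w /h; rewrite mem_cat orbC => ->. Qed.

Lemma C_add f g : in_cotensor f -> in_cotensor g -> in_cotensor (fun x => f x + g x).
Proof.
move=> hf hg; case: (hf) => Sf [cf _]; case: (hg) => Sg [cg _].
exists (Sf ++ Sg); split.
  move=> w hw; rewrite mem_cat; apply/norP => -[h1 h2]; move/negP: hw; apply.
  have -> : f w = 0 by apply/eqP; apply: contraR h1 => /cf.
  have -> : g w = 0 by apply/eqP; apply: contraR h2 => /cg.
  by rewrite addr0.
move=> u m; rewrite rhoD (in_cot hf (cover_cat _ cf)) (in_cot hg (cover_catr _ cg)).
by case: (m == [::]); rewrite ?addr0.
Qed.

Lemma C_sub f g : in_cotensor f -> in_cotensor g -> in_cotensor (fun x => f x - g x).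
Proof.
move=> hf hg; case: (hf) => Sf [cf _]; case: (hg) => Sg [cg _].
exists (Sf ++ Sg); split.
  move=> w hw; rewrite mem_cat; apply/norP => -[h1 h2]; move/negP: hw; apply.
  have -> : f w = 0 by apply/eqP; apply: contraR h1 => /cf.
  have -> : g w = 0 by apply/eqP; apply: contraR h2 => /cg.
  by rewrite subr0.
move=> u m; rewrite rhoB (in_cot hf (cover_cat _ cf)) (in_cot hg (cover_catr _ cg)).
by case: (m == [::]); rewrite ?subr0.
Qed.

Lemma rho_perm f S u m m' : perm_eq m m' -> coproj_coef f S u m = coproj_coef f S u m'.
Proof.
move=> h; rewrite !coprojE; apply: eq_bigr => w _; congr (_ * _).
by rewrite /Nc; congr (Posz _); apply: eq_count => s; rewrite (permPr h).
Qed.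

Lemma mult_cover (e : word -> word -> int) (W T : seq word) :
  (forall w z, e w z != 0 -> w \in W /\ z \in T) ->
  cover (mult_map e) [seq w ++ z | w <- W, z <- T].
Proof.
move=> He x; apply: contraR => hx; rewrite /mult_map big1 // => i _.
apply/eqP; apply: contraR hx => /He [h1 h2].
by rewrite -(cat_take_drop i x); apply: allpairs_f.
Qed.

Lemma fam_cover (c : word -> word -> int) (W : seq word) :
  (forall w, in_cotensor (c w)) -> exists T : seq word, forall w, w \in W -> cover (c w) T.
Proof.
move=> hC; elim: W => [|a W [T hT]]; first by exists [::].
case: (hC a) => Sa [ca _]; exists (Sa ++ T) => w; rewrite inE => /orP [/eqP ->|hw].
  exact: cover_cat.
exact: cover_catr (hT _ hw).
Qed.

Lemma tensor_support c : tensor_elt c ->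
  exists W T : seq word, forall w z, c w z != 0 -> w \in W /\ z \in T.
Proof.
case=> [[W hW] _ hC]; have [T hT] := fam_cover W hC.
exists W, T => w z hz; have hw := hW _ _ hz; split => //; exact: (hT _ hw _ hz).
Qed.

Lemma uniq_main c1 c2 : tensor_elt c1 -> tensor_elt c2 ->
  (forall x, mult_map c1 x = mult_map c2 x) -> forall w x, c1 w x = c2 w x.
Proof.
move=> t1 t2 heq.
have [W1 [T1 H1]] := tensor_support t1.
have [W2 [T2 H2]] := tensor_support t2.
case: t1 => _ so1 C1; case: t2 => _ so2 C2.
pose d w x := c1 w x - c2 w x.
have Hd : forall w z, d w z != 0 -> w \in W1 ++ W2 /\ z \in T1 ++ T2.
  move=> w z; rewrite /d; case: (eqVneq (c1 w z) 0) => [->|/H1 [h1 h2]] hz.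
    have [h1 h2] : w \in W2 /\ z \in T2 by apply: H2; move: hz; rewrite sub0r oppr_eq0.
    by rewrite !mem_cat h1 h2 !orbT.
  by rewrite !mem_cat h1 h2.
have Cd : forall w, in_cotensor (d w) by move=> w; apply: C_sub.
have sod : forall w x, d w x != 0 -> sorted leq w.
  move=> w x; rewrite /d; case: (eqVneq (c1 w x) 0) => [->|/so1 //].
  by rewrite sub0r oppr_eq0 => /so2.
have md0 : forall x, mult_map d x = 0.
  by move=> x; rewrite /mult_map sumrB -/(mult_map c1 x) -/(mult_map c2 x) heq subrr.
have hX : cover (mult_map d) [::] by move=> x; rewrite md0 eqxx.
set B := (\max_(w <- W1 ++ W2) deg w).+1.
have claim : forall k w, (B <= deg w + k)%N -> forall x, d w x = 0.
  elim=> [|k IH] w hk x.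
    case: (eqVneq (d w x) 0) => // /Hd [hw _].
    have hm : (deg w <= \max_(w0 <- W1 ++ W2) deg w0)%N.
      exact: (leq_bigmax_seq (F := deg) (P := predT) w hw isT).
    rewrite addn0 /B in hk; move: hk hm.
    move: (\max_(w0 <- W1 ++ W2) deg w0) => M; move: (deg w) => t; lia.
  case: (leqP B (deg w + k)) => [hk'|hk']; first exact: IH.
  case: (eqVneq (d w x) 0) => // nz; exfalso.
  have Hdeg : forall w' z, d w' z != 0 -> (deg w' <= deg w)%N.
    move=> w' z hz; rewrite leqNgt; apply/negP => hlt; move/eqP: hz; apply.
    apply: IH; move: hk hlt; move: (deg w) (deg w') => t t'; lia.
  have := KL_top x Hd Cd hX Hdeg.
  rewrite coprojE big_nil.
  have hw : w \in undup (W1 ++ W2) by rewrite mem_undup; case: (Hd _ _ nz).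
  rewrite (bigD1_seq w hw (undup_uniq _)) /= perm_refl mul1r big1 ?addr0.
    by move=> h; move/eqP: nz; apply; rewrite -h.
  move=> w' ne; case: (boolP (perm_eq w' w)) => hp; isimp.
  case: (eqVneq (d w' x) 0) => // nz'; case/negP: ne; apply/eqP.
  apply: (sorted_eq leq_trans anti_leq (sod _ _ nz') (sod _ _ nz) hp).
move=> w x; apply/eqP; rewrite -subr_eq0; apply/eqP.
apply: (claim B); exact: leq_addl.
Qed.

Lemma exist_main k : forall a S, cover a S ->
  (forall u m, (k < deg m)%N -> coproj_coef a S u m = 0) ->
  exists c, tensor_elt c /\ forall x, mult_map c x = a x.
Proof.
elim: k => [|k IH] a S hS htop.
  have haC : in_cotensor a.
    exists S; split => // u m; case: eqP => [->|ne]; first exact: rho_nil.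
    apply: htop; rewrite lt0n deg0; exact/eqP.
  exists (fun w x => if w == [::] then a x else 0); split.
    split.
    - exists [:: [::]] => w x; case: (eqVneq w [::]) => [->|]; by rewrite ?mem_seq1 ?eqxx.
    - by move=> w x; case: (eqVneq w [::]) => [->|] //; rewrite eqxx.
    - move=> w; case: (eqVneq w [::]) => [_|ne].
        by apply: (in_cot_ext _ haC) => x.
      by apply: (in_cot_ext _ in_cot0) => x.
  move=> x; rewrite /mult_map big_ord_recl /= take0 drop0 eqxx big1 ?addr0 // => i _.
  case: eqP => // h; have := congr1 size h; rewrite size_takel //.
set Ms := undup [seq sort leq s.2 | y <- S, s <- splits y].
set U := [seq s.1 | y <- S, s <- splits y].
pose e w x := if (w \in Ms) && (deg w == k.+1) then coproj_coef a S x w else 0.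
have He : forall w z, e w z != 0 -> w \in Ms /\ z \in U.
  move=> w z; rewrite /e; case: andP => // -[hw _] /rho_nz [y [s [hy hs h1 _]]].
  by split => //; apply/allpairsPdep; exists y, s; rewrite h1.
have hMs : forall w, w \in Ms -> sorted leq w.
  by move=> w; rewrite mem_undup => /allpairsPdep [y [s [_ _ ->]]]; exact: sort_sorted leq_total _.
have hCe : forall w, in_cotensor (e w).
  move=> w; rewrite /e; case: andP => [[hw /eqP hd]|_] /=; last exact: (in_cot_ext _ in_cot0).
  exists U; split.
    by move=> z /rho_nz [y [s [hy hs h1 _]]]; apply/allpairsPdep; exists y, s; rewrite h1.
  move=> u m; case: (eqVneq m [::]) => [->|ne].
    rewrite rho_nil //.
    by move=> z /rho_nz [y [s [hy hs h1 _]]]; apply/allpairsPdep; exists y, s; rewrite h1.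
  exact: (CA u hS htop hd ne).
set Xe := [seq w ++ z | w <- Ms, z <- U].
have hXe := mult_cover He.
pose a' x := a x - mult_map e x.
have hS' : cover a' (S ++ Xe).
  move=> x hx; rewrite mem_cat; apply/norP => -[h1 h2]; move/negP: hx; apply; rewrite /a'.
  have -> : a x = 0 by apply/eqP; apply: contraR h1 => /hS.
  have -> : mult_map e x = 0 by apply/eqP; apply: contraR h2 => /hXe.
  by rewrite subr0.
have htop' : forall u m, (k < deg m)%N -> coproj_coef a' (S ++ Xe) u m = 0.
  move=> u m hm; rewrite rhoB.
  have -> : coproj_coef a (S ++ Xe) u m = coproj_coef a S u m.
    by rewrite !coprojE; apply: sum_cover => //; exact: cover_cat.
  rewrite (KL_top u He hCe (cover_catr _ hXe)); last first.
    by move=> w z; rewrite /e; case: andP => // -[_ /eqP ->].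
  case: (ltnP k.+1 (deg m)) => [gt|le].
    rewrite htop // big1 ?subr0 // => w _.
    case: (boolP (perm_eq w m)) => hp; isimp.
    rewrite /e (deg_perm hp) gtn_eqF // andbF //.
  have hdm : deg m = k.+1 by apply/eqP; rewrite eqn_leq le hm.
  set ms := sort leq m.
  have hpm : perm_eq ms m by rewrite perm_sort perm_refl.
  have uniqw : forall w, w \in Ms -> perm_eq w m -> w = ms.
    move=> w hw hp; apply: (sorted_eq leq_trans anti_leq (hMs _ hw) (sort_sorted leq_total _)).
    by rewrite (permPr hpm).
  case: (boolP (ms \in Ms)) => hms.
    have hms' : ms \in undup Ms by rewrite mem_undup.
    rewrite (bigD1_seq ms hms' (undup_uniq _)) /= hpm mul1r big1 ?addr0.
      by rewrite /e hms (deg_perm hpm) hdm eqxx /= (rho_perm _ _ _ hpm) subrr.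
    move=> w ne; case: (boolP (perm_eq w m)) => hp; isimp.
    case: (boolP (w \in Ms)) => hw; last by rewrite /e (negbTE hw).
    by rewrite (uniqw _ hw hp) eqxx in ne.
  rewrite big_seq big1 ?subr0; last first.
    move=> w; rewrite mem_undup => hw; case: (boolP (perm_eq w m)) => hp; isimp.
    by move: hms; rewrite -(uniqw _ hw hp) hw.
  apply/eqP; apply: contraR hms => /rho_nz [y [s [hy hs _ hp]]].
  rewrite mem_undup; apply/allpairsPdep; exists y, s; split => //.
  exact/esym/(perm_sortP leq_total leq_trans anti_leq).
have [c' [tc' hc']] := IH a' (S ++ Xe) hS' htop'.
exists (fun w x => c' w x + e w x); split.
  case: tc' => [[W' hW'] so' C']; split.
  - exists (W' ++ Ms) => w x hx; rewrite mem_cat.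
    case: (eqVneq (c' w x) 0) => [h0|/hW' -> //].
    by move: hx; rewrite h0 add0r => /He [-> _]; rewrite orbT.
  - move=> w x hx; case: (eqVneq (c' w x) 0) => [h0|/so' //].
    by move: hx; rewrite h0 add0r => /He [/hMs].
  - by move=> w; apply: C_add.
move=> x; rewrite /mult_map big_split /= -/(mult_map c' x) -/(mult_map e x) hc'.
by rewrite /a' subrK.
Qed.

Lemma top_bound (n : word -> int) S : cover n S ->
  forall u m, (\max_(w <- S) deg w < deg m)%N -> coproj_coef n S u m = 0.
Proof.
move=> hS u m hm.
case: (eqVneq (coproj_coef n S u m) 0) => // /rho_nz [y [s [hy hs _ hp]]]; exfalso.
have h1 := splits_deg hs; rewrite (deg_perm hp) in h1.
have h2 : (deg y <= \max_(w <- S) deg w)%N.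
  exact: (leq_bigmax_seq (F := deg) (P := predT) y hy isT).
move: hm h1 h2; move: (\max_(w <- S) deg w) (deg m) (deg y) (deg s.1) => M a b c; lia.
Qed.

End Proofs.

Theorem mainTheorem15 :
  (forall c, tensor_elt c -> NSym_elt (mult_map c)) /\
  (forall n, NSym_elt n -> exists c, tensor_elt c /\ forall x, mult_map c x = n x) /\
  (forall c1 c2, tensor_elt c1 -> tensor_elt c2 ->
     (forall x, mult_map c1 x = mult_map c2 x) -> forall w x, c1 w x = c2 w x).
Proof.
split.
  move=> c tc; have [W [T He]] := tensor_support tc.
  exists [seq w ++ z | w <- W, z <- T]; exact: mult_cover He.
split.
  move=> n [S hS]; exact: (exist_main hS (top_bound hS)).
exact: uniq_main.
Qed.
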